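(* Let $\Omega$ be a finite set, $(H_i\mid i\in\Omega)$ finite abelian groups with $|H_i|\geqslant2$ for all $i$, $\mathbf{H}=\prod_{i\in\Omega}H_i$, $\mathbf{P}=(\Omega,\preccurlyeq_{\mathbf{P}})$ a poset, and $\Lambda$ the dual partition of $\mathcal{Q}(\mathbf{H},\mathbf{P})$. Let $\alpha,\gamma\in\hat{\mathbf{H}}$ lie in the same block of $\Lambda$, and let $D=\langle\mathrm{supp}(\alpha)\rangle_{\overline{\mathbf{P}}}$, $B=\langle\mathrm{supp}(\gamma)\rangle_{\overline{\mathbf{P}}}$. Then $|D|-|\min_{\mathbf{P}}(D)|=|B|-|\min_{\mathbf{P}}(B)|$.
   Context: $\hat{\mathbf{H}}$ is the character group of $\mathbf{H}$, identified with $\prod_i\hat{H_i}$ via $\alpha(\beta)=\prod_i\alpha_{(i)}(\beta_{(i)})$; $\mathrm{supp}$ of a codeword is the set of coordinates where it is not the identity. $\min_{\mathbf{P}}(B)$ is the set of minimal elements of $B$ in $\mathbf{P}$. For a poset $\mathbf{Q}$ on $\Omega$, $\langle B\rangle_{\mathbf{Q}}$ is the down-closure of $B$ and $\mathrm{wt}_{\mathbf{Q}}(\beta)=|\langle\mathrm{supp}(\beta)\rangle_{\mathbf{Q}}|$; $\overline{\mathbf{P}}$ is the dual poset. $\mathcal{Q}(\mathbf{H},\mathbf{P})$ is the partition of $\mathbf{H}$ into classes of equal $\mathbf{P}$-weight, and $\Lambda$ is the partition of $\hat{\mathbf{H}}$ with $\chi\sim\psi$ iff $\sum_{b\in B}\chi(b)=\sum_{b\in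 B}\psi(b)$ for every block $B$ of $\mathcal{Q}(\mathbf{H},\mathbf{P})$. *)

(* Defs.v *)
From HB Require Import structures.
From mathcomp Require Import all_boot all_order all_algebra all_field.
Set Implicit Arguments. Unset Strict Implicit. Unset Printing Implicit Defensive.
Import Order.TTheory GRing.Theory Num.Theory.
Local Open Scope ring_scope.

(* The finite abelian groups H_i are finite Z-modules (written additively).
   The ambient group H = prod_i H_i is the finite type of dependent finite
   functions {dffun forall i, H i}. *)
Definition codeword (Omega : finType) (H : Omega -> finZmodType) :=
  {dffun forall i : Omega, H i}.

Definition is_character (G : finZmodType) (f : G -> algC) : Prop :=
  f 0 = 1 /\ forall x y : G, f (x + y) = f x * f y.

(* An element of \hat H, identified with prod_i \hat H_i. *)
Definition is_Hchar (Omega : finType) (H : Omega -> finZmodType)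
  (alpha : forall i : Omega, H i -> algC) : Prop :=
  forall i, is_character (alpha i).

Definition char_eval (Omega : finType) (H : Omega -> finZmodType)
  (alpha : forall i : Omega, H i -> algC) (beta : codeword H) : algC :=
  \prod_(i : Omega) alpha i (beta i).

Definition supp (Omega : finType) (H : Omega -> finZmodType) (beta : codeword H)
  : {set Omega} := [set i | beta i != 0].
Definition char_supp (Omega : finType) (H : Omega -> finZmodType)
  (alpha : forall i : Omega, H i -> algC) : {set Omega} :=
  [set i | [exists x : H i, alpha i x != 1]].

Definition is_poset (Omega : finType) (le : rel Omega) : Prop :=
  reflexive le /\ antisymmetric le /\ transitive le.

Definition dual_rel (Omega : finType) (le : rel Omega) : rel Omega :=
  fun x y => le y x.

Definition ideal_of (Omega : finType) (le : rel Omega) (B : {set Omega}) : {set Omega} :=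
  [set j | [exists i in B, le j i]].

Definition wtP (Omega : finType) (H : Omega -> finZmodType) (le : rel Omega)
  (beta : codeword H) : nat := #|ideal_of le (supp beta)|.

Definition minP (Omega : finType) (le : rel Omega) (B : {set Omega}) : {set Omega} :=
  [set i in B | [forall j in B, le j i ==> (j == i)]].

(* chi ~ psi in Lambda: equal sums over every block of Q(H,P); the blocks are
   the nonempty classes {beta | wt_P(beta) = k}, and for empty classes both
   sums are 0, so quantifying over all k : nat is the same condition. *)
Definition same_Lambda_block (Omega : finType) (H : Omega -> finZmodType)
  (le : rel Omega) (chi psi : forall i : Omega, H i -> algC) : Prop :=
  forall k : nat,
    \sum_(b : codeword H | wtP le b == k) char_eval chi b =
    \sum_(b : codeword H | wtP le b == k) char_eval psi b.

(* Main.v *)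
Require Import Defs.
From mathcomp Require Import all_boot all_order all_algebra all_field.
From mathcomp Require Import zify.
Set Implicit Arguments. Unset Strict Implicit. Unset Printing Implicit Defensive.
Import Order.TTheory GRing.Theory Num.Theory.
Local Open Scope ring_scope.

Lemma not_supp_triv (Omega : finType) (H : Omega -> finZmodType)
  (alpha : forall i : Omega, H i -> algC) i x :
  i \notin char_supp alpha -> alpha i x = 1.
Proof.
rewrite /char_supp inE => /existsPn /(_ x); by rewrite negbK => /eqP.
Qed.

Lemma shift0 (Omega : finType) (H : Omega -> finZmodType)
  (alpha : forall i : Omega, H i -> algC) (halpha : is_Hchar alpha)
  (m : Omega) (hm : m \in char_supp alpha) (P : pred (codeword H))
  (hPm : forall b b' : codeword H, (forall i, i != m -> b i = b' i) -> P b = P b') :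
  \sum_(b | P b) char_eval alpha b = 0.
Proof.
move: hm; rewrite /char_supp inE => /existsP [x0 hx0].
pose d := @dfwith Omega (fun i => H i) (fun i => 0) m x0.
pose h (b : codeword H) : codeword H := [ffun i => b i + d i].
have hinj : injective h.
  move=> b1 b2 /ffunP e; apply/ffunP => i; have := e i; rewrite !ffunE.
  by move/addIr.
have hd : \prod_(i : Omega) alpha i (d i) = alpha m x0.
  rewrite (bigD1 m) //= /d dfwith_in big1 ?mulr1 // => i /negbTE im.
  rewrite dfwith_out; first by case: (halpha i).
  by rewrite eq_sym im.
have hh : forall b, char_eval alpha (h b) = alpha m x0 * char_eval alpha b.
  move=> b; rewrite /char_eval -hd -big_split /=; apply: eq_bigr => i _.
  by rewrite ffunE (proj2 (halpha i)) mulrC.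
have hPh : forall b, P (h b) = P b.
  move=> b; apply: hPm => i im; rewrite ffunE /d dfwith_out ?addr0 //.
  by rewrite eq_sym.
set S := \sum_(b | P b) _.
have : S = alpha m x0 * S.
  rewrite {1}/S (reindex_inj hinj) /= mulr_sumr; apply: eq_big => b.
    exact: hPh.
  by move=> _; rewrite hh.
move/eqP; rewrite -subr_eq0 -{1}(mul1r S) -mulrBl mulf_eq0 subr_eq0 eq_sym.
by rewrite (negbTE hx0) => /eqP.
Qed.

Lemma ideal_shift (Omega : finType) (H : Omega -> finZmodType) (le : rel Omega)
  (hP : is_poset le) (b b' : codeword H) s t :
  (forall i, i != s -> b i = b' i) -> le s t -> s != t ->
  t \in ideal_of le (supp b) -> ideal_of le (supp b) \subset ideal_of le (supp b').
Proof.
case: hP => rf [an tr] hb hst hne.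
rewrite inE => /existsP [u /andP [hu htu]].
have hus : u != s.
  apply/eqP => eus; move: htu; rewrite eus => hts.
  by move: hne; rewrite (an s t) ?hst ?hts ?eqxx.
apply/subsetP => j; rewrite !inE => /existsP [i /andP [hi hji]].
apply/existsP; case: (eqVneq i s) => [eis | his].
  exists u; rewrite /supp inE -hb //.
  move: hu; rewrite /supp inE => -> /=.
  apply: (tr t) => //; apply: (tr s) => //; by rewrite -eis.
exists i; rewrite /supp inE -hb // hji andbT.
by move: hi; rewrite /supp inE.
Qed.

Lemma ideal_shift_eq (Omega : finType) (H : Omega -> finZmodType) (le : rel Omega)
  (hP : is_poset le) (b b' : codeword H) s t :
  (forall i, i != s -> b i = b' i) -> le s t -> s != t ->
  t \in ideal_of le (supp b) -> ideal_of le (supp b) = ideal_of le (supp b').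
Proof.
move=> hb hst hne ht.
have h1 := ideal_shift hP hb hst hne ht.
apply/eqP; rewrite eqEsubset h1 /=.
apply: (ideal_shift hP (b := b') (s := s) (t := t)) => //.
  by move=> i /hb ->.
exact: (subsetP h1).
Qed.

Lemma vanishA (Omega : finType) (H : Omega -> finZmodType) (le : rel Omega)
  (hP : is_poset le)
  (alpha : forall i : Omega, H i -> algC) (halpha : is_Hchar alpha)
  (I : {set Omega}) s t :
  s \in char_supp alpha -> t \in I -> le s t -> s != t ->
  \sum_(b : codeword H | ideal_of le (supp b) == I) char_eval alpha b = 0.
Proof.
move=> hs ht hst hne; apply: (shift0 halpha hs) => b b' hb.
have hb' : forall i, i != s -> b' i = b i by move=> i /hb ->.
case E: (ideal_of le (supp b) == I); case E': (ideal_of le (supp b') == I) => //.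
  move/eqP: E => E; move: E'; rewrite -(ideal_shift_eq hP hb hst hne) ?E ?eqxx //.
move/eqP: E' => E'; move: E; rewrite -(ideal_shift_eq hP hb' hst hne) ?E' ?eqxx //.
Qed.

Definition I0 (Omega : finType) (le : rel Omega) (S : {set Omega}) : {set Omega} :=
  ~: ideal_of (dual_rel le) S :|: minP le (ideal_of (dual_rel le) S).
Definition maxs (Omega : finType) (le : rel Omega) (I : {set Omega}) : {set Omega} :=
  [set i in I | [forall j in I, le i j ==> (j == i)]].
Definition downclosed (Omega : finType) (le : rel Omega) (I : {set Omega}) :=
  forall i j, i \in I -> le j i -> j \in I.

Lemma ideal_down (Omega : finType) (le : rel Omega) (hP : is_poset le) X :
  downclosed le (ideal_of le X).
Proof.
case: hP => rf [an tr] i j; rewrite !inE => /existsP [k /andP [hk hik]] hji.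
by apply/existsP; exists k; rewrite hk (tr i).
Qed.

Lemma adm_sub (Omega : finType) (le : rel Omega) (hP : is_poset le)
  (S I : {set Omega}) :
  downclosed le I -> (forall s t, s \in S -> t \in I -> le s t -> s = t) ->
  I \subset I0 le S.
Proof.
case: hP => rf [an tr] hd hadm; apply/subsetP => x hx.
rewrite !inE; case: (boolP [exists i in S, dual_rel le x i]) => //= /existsP [s /andP [hs hsx]].
have esx : s = x by apply: hadm.
apply/forallP => j; apply/implyP; rewrite inE => /existsP [s' /andP [hs' hs'j]].
apply/implyP => hjx.
rewrite /dual_rel in hs'j.
have hjI : j \in I by apply: (hd x).
have e1 : s' = j by apply: hadm.
have e2 : s' = x by apply: hadm => //; apply: (tr j).
by rewrite -e1 e2.
Qed.

Lemma I0_down (Omega : finType) (le : rel Omega) (hP : is_poset le) (S : {set Omega}) :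
  downclosed le (I0 le S).
Proof.
case: hP => rf [an tr] i j; rewrite /I0 !inE.
case/orP.
  move=> hi hji; apply/orP; left; apply: contra hi => /existsP [s /andP [hs hsj]].
  by apply/existsP; exists s; rewrite hs /dual_rel (tr j).
case/andP => hi /forallP hmin hji.
case: (boolP [exists i0 in S, dual_rel le j i0]) => //= hj.
have := hmin j; rewrite inE hj hji /= => /eqP ->.
by apply/forallP.
Qed.

Lemma I0_supp (Omega : finType) (le : rel Omega) (hP : is_poset le) (S : {set Omega}) :
  S \subset ~: I0 le S :|: maxs le (I0 le S).
Proof.
case: hP => rf [an tr]; apply/subsetP => s hs.
have hsD : s \in ideal_of (dual_rel le) S by rewrite inE; apply/existsP; exists s; rewrite hs /dual_rel rf.
rewrite in_setU in_setC; case: (boolP (s \in I0 le S)) => //= hs0.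
rewrite /maxs in_set hs0 /=; apply/forallP => j; apply/implyP => hj; apply/implyP => hsj.
have hjD : j \in ideal_of (dual_rel le) S.
  by rewrite inE; apply/existsP; exists s; rewrite hs /dual_rel hsj.
move: hj; rewrite /I0 !inE.
move: (hjD); rewrite inE => -> /= /forallP hh; move: (hh s).
by rewrite hsD hsj /= eq_sym.
Qed.

Lemma exists_max (Omega : finType) (le : rel Omega) (hP : is_poset le)
  (I : {set Omega}) j : j \in I -> exists2 m, m \in maxs le I & le j m.
Proof.
case: hP => rf [an tr].
have [n] := ubnP #|[set k in I | le j k]|; elim: n j => // n IH j hn hj.
case: (boolP (j \in maxs le I)) => [hm | hm]; first by exists j.
move: hm; rewrite /maxs inE hj /= => /forallPn [k].
rewrite negb_imply => /andP [hk]; rewrite negb_imply => /andP [hjk hkj].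
have [m hm hkm] : exists2 m, m \in maxs le I & le k m.
  apply: (IH k) => //.
  rewrite -ltnS; apply: leq_trans hn; rewrite ltnS; apply: proper_card; rewrite properE.
  apply/andP; split.
    by apply/subsetP => x; rewrite !inE => /andP [-> hkx]; rewrite (tr k).
  apply/subsetPn; exists j; first by rewrite inE hj rf.
  rewrite inE hj /=; apply: contra hkj => hkj'.
  by rewrite (an k j) // hjk hkj'.
by exists m => //; apply: (tr k).
Qed.

Lemma char_I (Omega : finType) (H : Omega -> finZmodType) (le : rel Omega)
  (hP : is_poset le) (I : {set Omega}) (b : codeword H) :
  downclosed le I ->
  (ideal_of le (supp b) == I) =
  [forall i, ((i \in ~: I) ==> (b i == 0)) && ((i \in maxs le I) ==> (b i != 0))].
Proof.
move=> hd; have hP' := hP; case: hP' => rf [an tr].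
apply/eqP/forallP.
  move=> <- i; apply/andP; split; apply/implyP.
    rewrite inE; apply: contraR => hi; rewrite inE; apply/existsP; exists i.
    by rewrite /supp inE hi rf.
  rewrite /maxs inE => /andP [/[dup] hiI]; rewrite inE => /existsP [k /andP [hk hik]].
  move=> /forallP /(_ k) /implyP h; have hkI : k \in ideal_of le (supp b) by rewrite inE; apply/existsP; exists k; rewrite hk rf.
  move: (h hkI) => /implyP /(_ hik) /eqP <-.
  by move: hk; rewrite /supp inE.
move=> hb; apply/eqP; rewrite eqEsubset; apply/andP; split.
  apply/subsetP => x; rewrite inE => /existsP [k /andP [hk hxk]].
  apply: (hd k) => //; move: (hb k) => /andP [h1 _]; move: h1.
  rewrite inE => /implyP h; apply: contraT => /h /eqP hk0.
  by move: hk; rewrite /supp inE hk0 eqxx.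
apply/subsetP => x hx; have [m hm hxm] := exists_max hP hx.
rewrite inE; apply/existsP; exists m; rewrite hxm andbT /supp inE.
by move: (hb m) => /andP [_ /implyP]; apply.
Qed.

Definition PZN (Omega : finType) (H : Omega -> finZmodType) (Z N : {set Omega})
  (b : codeword H) : bool :=
  [forall i, ((i \in Z) ==> (b i == 0)) && ((i \in N) ==> (b i != 0))].

Lemma nz_exists (Omega : finType) (H : Omega -> finZmodType)
  (hH : forall i : Omega, (1 < #|{: H i}|)%N) i : exists x : H i, x != 0.
Proof.
move: (hH i) => /card_gt1P [x [y [_ _ hxy]]].
case: (eqVneq x 0) => [ex | hx]; last by exists x.
by exists y; rewrite -ex eq_sym.
Qed.

Lemma PZN_nonempty (Omega : finType) (H : Omega -> finZmodType)
  (hH : forall i : Omega, (1 < #|{: H i}|)%N) (Z N : {set Omega}) :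
  (forall i, i \in Z -> i \notin N) -> (0 < #|[pred b : codeword H | PZN Z N b]|)%N.
Proof.
move=> hZN.
have nz : forall i, {x : H i | x != 0}.
  move=> i; case: (pickP (fun x : H i => x != 0)) => [x hx | h0]; first by exists x.
  by exfalso; have [x hx] := nz_exists hH i; move: (h0 x); rewrite hx.
apply/card_gt0P.
exists (finfun (fun i : Omega => if i \in N then sval (nz i) else 0) : codeword H).
rewrite inE /PZN; apply/forallP => i; rewrite ffunE.
case: (boolP (i \in N)) => hN /=.
  rewrite (proj2_sig (nz i)) andbT; apply/implyP => hZ; by move: (hZN i hZ); rewrite hN.
by rewrite eqxx implybT.
Qed.

Lemma lemmaG (Omega : finType) (H : Omega -> finZmodType)
  (hH : forall i : Omega, (1 < #|{: H i}|)%N)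
  (alpha : forall i : Omega, H i -> algC) (halpha : is_Hchar alpha) :
  forall n (Z N : {set Omega}), #|char_supp alpha :&: N| = n ->
  (forall i, i \in Z -> i \notin N) -> char_supp alpha \subset Z :|: N ->
  exists2 c : nat, (0 < c)%N &
    \sum_(b : codeword H | PZN Z N b) char_eval alpha b = (-1) ^+ n * c%:R.
Proof.
elim=> [|n IH] Z N hn hZN hS.
  exists #|[pred b : codeword H | PZN Z N b]|; first exact: PZN_nonempty.
  rewrite expr0 mul1r -sumr_const; apply: eq_bigr => b hb.
  rewrite /char_eval big1 // => i _.
  case: (boolP (i \in char_supp alpha)) => hi; last exact: not_supp_triv.
  have hiN : i \notin N.
    apply/negP => hiN; move/eqP: hn; rewrite cards_eq0 => /eqP hn.
    have hin : i \in char_supp alpha :&: N by rewrite inE hi hiN.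
    by rewrite hn inE in hin.
  have hiZ : i \in Z by move: (subsetP hS i hi); rewrite inE (negbTE hiN) orbF.
  move: hb => /forallP /(_ i) /andP [/implyP /(_ hiZ) /eqP -> _].
  by case: (halpha i).
have [m hm] : exists m, m \in char_supp alpha :&: N.
  by apply/card_gt0P; rewrite hn.
move: hm; rewrite inE => /andP [hmS hmN].
have hmZ : m \notin Z by apply/negP => /hZN; rewrite hmN.
set Z' := m |: Z; set N' := N :\ m.
have [c hc hsum] : exists2 c : nat, (0 < c)%N &
    \sum_(b : codeword H | PZN Z' N' b) char_eval alpha b = (-1) ^+ n * c%:R.
  apply: IH.
  - rewrite /N' setIDA; move: hn; rewrite (cardsD1 m) inE hmS hmN /=.
    by move=> [].
  - move=> i; rewrite /Z' /N' !inE => /orP [/eqP -> | hi]; first by rewrite eqxx.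
    by rewrite (negbTE (hZN i hi)) andbF.
  - apply/subsetP => i hi; move: (subsetP hS i hi); rewrite /Z' /N' !inE.
    by case: (eqVneq i m).
exists c => //.
have h0 : \sum_(b : codeword H | PZN Z N' b) char_eval alpha b = 0.
  apply: (shift0 halpha hmS) => b b' hb; apply: eq_forallb => i.
  case: (eqVneq i m) => [-> | him]; last by rewrite hb.
  by rewrite (negbTE hmZ) /N' !inE eqxx.
move: h0; rewrite (bigID (fun b : codeword H => b m == 0)) /=.
have e1 : forall b : codeword H, PZN Z N' b && (b m == 0) = PZN Z' N' b.
  move=> b; apply/idP/idP.
    case/andP => /forallP hb hbm; apply/forallP => i; rewrite /Z' /N' !inE.
    case: (eqVneq i m) => [-> | him] /=; first by rewrite hbm.
    by move: (hb i); rewrite /N' !inE him.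
  move/forallP => hb; apply/andP; split.
    apply/forallP => i; move: (hb i); rewrite /Z' /N' !inE.
    by case: (eqVneq i m) => [-> | him] /=; rewrite ?(negbTE hmZ).
  by move: (hb m); rewrite /Z' !inE eqxx /= => /andP [].
have e2 : forall b : codeword H, PZN Z N' b && (b m != 0) = PZN Z N b.
  move=> b; apply/idP/idP.
    case/andP => /forallP hb hbm; apply/forallP => i.
    case: (eqVneq i m) => [-> | him] /=; first by rewrite hbm (negbTE hmZ) implybT.
    by move: (hb i); rewrite /N' !inE him.
  move/forallP => hb; apply/andP; split.
    apply/forallP => i; move: (hb i); rewrite /N' !inE.
    by case: (eqVneq i m) => [-> | him] /=; rewrite ?(negbTE hmZ) ?implybT.
  by move: (hb m); rewrite hmN /= => /andP [].
rewrite (eq_bigl _ _ e1) (eq_bigl _ _ e2) hsum => /eqP.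
rewrite addrC addr_eq0 => /eqP ->.
by rewrite exprS mulN1r mulNr.
Qed.

Lemma nonzero_sub (Omega : finType) (H : Omega -> finZmodType) (le : rel Omega)
  (hP : is_poset le)
  (alpha : forall i : Omega, H i -> algC) (halpha : is_Hchar alpha) (I : {set Omega}) :
  \sum_(b : codeword H | ideal_of le (supp b) == I) char_eval alpha b != 0 ->
  I \subset I0 le (char_supp alpha).
Proof.
move=> hnz.
case: (pickP (fun b : codeword H => ideal_of le (supp b) == I)) => [b hb | h0]; last first.
  by move: hnz; rewrite big_pred0 ?eqxx.
move/eqP: hb => hb.
apply: adm_sub => //; first by rewrite -hb; apply: ideal_down.
move=> s t hs ht hst; apply/eqP; apply: contraT => hne.
by move: hnz; rewrite (vanishA hP halpha hs ht hst hne) eqxx.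
Qed.

Lemma sum_k (Omega : finType) (H : Omega -> finZmodType) (le : rel Omega)
  (alpha : forall i : Omega, H i -> algC) (k : nat) :
  \sum_(b : codeword H | wtP le b == k) char_eval alpha b =
  \sum_(I : {set Omega} | #|I| == k)
     \sum_(b : codeword H | ideal_of le (supp b) == I) char_eval alpha b.
Proof.
rewrite (partition_big (fun b : codeword H => ideal_of le (supp b)) (fun I : {set Omega} => #|I| == k)) //=.
apply: eq_bigr => I /eqP hI; apply: eq_bigl => b.
case: (eqVneq (ideal_of le (supp b)) I) => [e | ne]; rewrite ?andbF ?andbT //.
by rewrite /wtP e hI eqxx.
Qed.

Lemma big_vanish (Omega : finType) (H : Omega -> finZmodType) (le : rel Omega)
  (hP : is_poset le)
  (alpha : forall i : Omega, H i -> algC) (halpha : is_Hchar alpha) (k : nat) :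
  (#|I0 le (char_supp alpha)| < k)%N ->
  \sum_(b : codeword H | wtP le b == k) char_eval alpha b = 0.
Proof.
move=> hk; rewrite sum_k big1 // => I /eqP hI; apply/eqP; apply: contraT => hnz.
have := subset_leq_card (nonzero_sub hP halpha hnz); rewrite hI => h.
by move: (leq_ltn_trans h hk); rewrite ltnn.
Qed.

Lemma at_I0 (Omega : finType) (H : Omega -> finZmodType) (le : rel Omega)
  (hH : forall i : Omega, (1 < #|{: H i}|)%N)
  (hP : is_poset le)
  (alpha : forall i : Omega, H i -> algC) (halpha : is_Hchar alpha) :
  \sum_(b : codeword H | wtP le b == #|I0 le (char_supp alpha)|) char_eval alpha b != 0.
Proof.
rewrite sum_k (bigD1 (I0 le (char_supp alpha))) //= [X in _ + X]big1 ?addr0; last first.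
  move=> I /andP [/eqP hI hne]; apply/eqP; apply: contraT => hnz.
  have hs := nonzero_sub hP halpha hnz.
  by move: hne; rewrite eqEcard hs hI leqnn.
rewrite (eq_bigl (PZN (~: I0 le (char_supp alpha)) (maxs le (I0 le (char_supp alpha))))); last first.
  by move=> b; rewrite (char_I hP b (@I0_down _ _ hP _)) /PZN.
have hdis : forall i, i \in ~: I0 le (char_supp alpha) -> i \notin maxs le (I0 le (char_supp alpha)).
  by move=> i; rewrite inE => hi; apply: contra hi; rewrite /maxs inE => /andP [].
have [c hc ->] := lemmaG hH halpha (erefl _) hdis (I0_supp hP _).
by rewrite mulf_neq0 ?signr_eq0 // pnatr_eq0 -lt0n.
Qed.

Lemma card_I0 (Omega : finType) (le : rel Omega) (S : {set Omega}) :
  (#|I0 le S| + #|ideal_of (dual_rel le) S| =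
   #|Omega| + #|minP le (ideal_of (dual_rel le) S)|)%N.
Proof.
set D := ideal_of _ S.
have hM : minP le D \subset D by apply/subsetP => x; rewrite inE => /andP [].
have e : ~: D :&: minP le D = set0.
  apply/setP => x; rewrite in_setI in_setC in_set0; case: (boolP (x \in D)) => //= hx.
  by apply/negP => hxm; move: (subsetP hM x hxm); rewrite (negbTE hx).
have hD := max_card D; rewrite cardE in hD.
rewrite /I0 -/D cardsU e cards0 subn0 cardsCs setCK.
have := subset_leq_card hM. rewrite -cardE in hD. lia.
Qed.

Unset Implicit Arguments.
Close Scope ring_scope.

Theorem proposition2p3 (Omega : finType) (H : Omega -> finZmodType)
  (le : rel Omega)
  (hH : forall i : Omega, (1 < #|{: H i}|)%N)
  (hP : is_poset le)
  (alpha gamma : forall i : Omega, H i -> algC)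
  (halpha : is_Hchar alpha) (hgamma : is_Hchar gamma)
  (hblock : same_Lambda_block le alpha gamma) :
  let D := ideal_of (dual_rel le) (char_supp alpha) in
  let B := ideal_of (dual_rel le) (char_supp gamma) in
  (#|D| - #|minP le D| = #|B| - #|minP le B|)%N.
Proof.
move=> D B.
have hag : #|I0 le (char_supp alpha)| = #|I0 le (char_supp gamma)|.
  case: (ltngtP #|I0 le (char_supp alpha)| #|I0 le (char_supp gamma)|) => // h.
    have := at_I0 hH hP hgamma; rewrite -hblock big_vanish ?eqxx //.
  have := at_I0 hH hP halpha; rewrite hblock big_vanish ?eqxx //.
have h1 := card_I0 le (char_supp alpha).
have h2 := card_I0 le (char_supp gamma).
have h3 : (#|minP le D| <= #|D|)%N.
  by apply: subset_leq_card; apply/subsetP => x; rewrite inE => /andP [].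
have h4 : (#|minP le B| <= #|B|)%N.
  by apply: subset_leq_card; apply/subsetP => x; rewrite inE => /andP [].
rewrite -/D -/B in h1 h2.
lia.
Qed.
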